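(* Let $d\ge1$, $\delta_1,\dots,\delta_d>0$, $0\le\kappa<1$, $\mathbf a=(a_1,\dots,a_d)\in(0,\infty)^d$ and $\mathbf t=(t_1,\dots,t_d)\in(0,\infty)^d$. Then $s(\mathbf t)=\hat s(\mathbf t)$, i.e. the minimum defining $s(\mathbf t)$ over $A\in\{a_i,a_i+t_i:1\le i\le d\}$ is already attained over $A\in\{a_i+t_i:1\le i\le d\}$.
   Context: For $A>0$ define $\mathcal K_1(A)=\{k:a_k\ge A\}$, $\mathcal K_2(A)=\{k:a_k+t_k\le A\}\setminus\mathcal K_1(A)$, $\mathcal K_3(A)=\{1,\dots,d\}\setminus(\mathcal K_1(A)\cup\mathcal K_2(A))$ and $$D(A)=\sum_{k\in\mathcal K_1(A)}\delta_k+\sum_{k\in\mathcal K_2(A)}\delta_k+\kappa\sum_{k\in\mathcal K_3(A)}\delta_k+(1-\kappa)\frac{\sum_{k\in\mathcal K_3(A)}a_k\delta_k-\sum_{k\in\mathcal K_2(A)}t_k\delta_k}{A}.$$ Then $s(\mathbf t)=\min\{D(A):A\in\{a_i,a_i+t_i:1\le i\le d\}\}$ and $\hat s(\mathbf t)=\min\{D(A):A\in\{a_i+t_i:1\le i\le d\}\}$. *)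

(* Defs.v *)
From HB Require Import structures.
From mathcomp Require Import all_boot all_order all_algebra.
Set Implicit Arguments. Unset Strict Implicit. Unset Printing Implicit Defensive.
Import Order.TTheory GRing.Theory Num.Theory.
Local Open Scope ring_scope.

Section Defs.
Variables (R : realFieldType) (d : nat).

Definition K1 (a : 'I_d -> R) (A : R) : {set 'I_d} := [set k | A <= a k].
Definition K2 (a t : 'I_d -> R) (A : R) : {set 'I_d} :=
  [set k | a k + t k <= A] :\: K1 a A.
Definition K3 (a t : 'I_d -> R) (A : R) : {set 'I_d} :=
  ~: (K1 a A :|: K2 a t A).

Definition Dfun (delta a t : 'I_d -> R) (kappa A : R) : R :=
  \sum_(k in K1 a A) delta k + \sum_(k in K2 a t A) delta k
  + kappa * \sum_(k in K3 a t A) delta k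
  + (1 - kappa) *
    ((\sum_(k in K3 a t A) a k * delta k - \sum_(k in K2 a t A) t k * delta k) / A).

(* Finite minimum of a list of reals, given a default for the empty list
   (only used on nonempty lists below). *)
Definition minlist (x0 : R) (s : seq R) : R := foldr Order.min x0 s.

Definition s_val (delta a t : 'I_d -> R) (kappa : R) (x0 : R) : R :=
  minlist x0 ([seq Dfun delta a t kappa (a i) | i <- enum 'I_d]
           ++ [seq Dfun delta a t kappa (a i + t i) | i <- enum 'I_d]).

Definition shat_val (delta a t : 'I_d -> R) (kappa : R) (x0 : R) : R :=
  minlist x0 [seq Dfun delta a t kappa (a i + t i) | i <- enum 'I_d].

End Defs.

(* Main.v *)
Require Import Defs.
From HB Require Import structures.
From mathcomp Require Import all_boot all_order all_algebra.
From mathcomp Require Import ring lra.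
Import Order.TTheory GRing.Theory Num.Theory.
Local Open Scope ring_scope.
Section S.
Variable R : realFieldType.
Definition phi (a t A : R) := if A <= a then A else if a + t <= A then A - t else a.

Lemma phi_concave a t L x U : 0 < t -> L <= x -> x <= U -> (a + t <= L \/ U <= a + t) ->
  (U - x) * phi a t L + (x - L) * phi a t U <= (U - L) * phi a t x.
Proof.
move=> ht hLx hxU hc; rewrite /phi.
case: (lerP x a) => h1; case: (lerP (a+t) x) => h2;
case: (lerP L a) => h3; case: (lerP (a+t) L) => h4;
case: (lerP U a) => h5; case: (lerP (a+t) U) => h6; case: hc => hc; nra.
Qed.

Variable d : nat.
Lemma sumS (S : {set 'I_d}) (f : 'I_d -> R) : \sum_(k in S) f k = \sum_k (if k \in S then f k else 0).
Proof. exact: big_mkcond. Qed.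

Lemma Dfun_H (delta a t : 'I_d -> R) kappa A : 0 < A ->
  A * Dfun delta a t kappa A = \sum_k delta k * (kappa * A + (1-kappa) * phi (a k) (t k) A).
Proof.
move=> hA; rewrite /Dfun !sumS.
symmetry; rewrite (eq_bigr (fun k => A * (if k \in K1 a A then delta k else 0)
  + A * (if k \in K2 a t A then delta k else 0)
  + (kappa * A) * (if k \in K3 a t A then delta k else 0)
  + (1 - kappa) * ((if k \in K3 a t A then a k * delta k else 0)
       - (if k \in K2 a t A then t k * delta k else 0)))).
  rewrite !big_split /= -!mulr_sumr sumrB.
  field; by rewrite gt_eqF.
move=> k _; rewrite /phi /K3 /K2 /K1 !inE.
case: (lerP A (a k)) => h1 /=; case: (lerP (a k + t k) A) => h2 /=; ring.
Qed.

Definition H (delta a t : 'I_d -> R) kappa A :=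
  \sum_k delta k * (kappa * A + (1-kappa) * phi (a k) (t k) A).

Lemma H_concave (delta a t : 'I_d -> R) kappa L x U :
  (forall k, 0 < delta k) -> 0 <= kappa -> kappa < 1 -> (forall k, 0 < t k) ->
  L <= x -> x <= U -> (forall k, a k + t k <= L \/ U <= a k + t k) ->
  (U - x) * H delta a t kappa L + (x - L) * H delta a t kappa U <= (U - L) * H delta a t kappa x.
Proof.
move=> hd hk0 hk1 ht hLx hxU hc; rewrite /H !mulr_sumr -big_split /=.
apply: ler_sum => k _.
have := @phi_concave (a k) (t k) L x U (ht k) hLx hxU (hc k).
set pL := phi _ _ L; set pU := phi _ _ U; set px := phi _ _ x => hcv.
have h0 : 0 <= delta k * (1 - kappa) by apply: mulr_ge0; [exact: ltW|lra].
have h1 : 0 <= delta k * (1 - kappa) * ((U - L) * px - ((U - x) * pL + (x - L) * pU)) by apply: mulr_ge0 => //; rewrite subr_ge0.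
have e : (U - L) * (delta k * (kappa * x + (1 - kappa) * px)) -
  ((U - x) * (delta k * (kappa * L + (1 - kappa) * pL)) +
   (x - L) * (delta k * (kappa * U + (1 - kappa) * pU))) =
  delta k * (1 - kappa) * ((U - L) * px - ((U - x) * pL + (x - L) * pU)) by ring.
by rewrite -subr_ge0 e.
Qed.

Lemma H_D (delta a t : 'I_d -> R) kappa A : 0 < A ->
  H delta a t kappa A = A * Dfun delta a t kappa A.
Proof. by move=> hA; rewrite Dfun_H. Qed.

Lemma H0 (delta a t : 'I_d -> R) kappa : (forall k, 0 < a k) -> H delta a t kappa 0 = 0.
Proof.
move=> ha; rewrite /H big1 // => k _; rewrite /phi (ltW (ha k)); ring.
Qed.

Lemma key (delta a t : 'I_d -> R) kappa :
  (forall k, 0 < delta k) -> 0 <= kappa -> kappa < 1 -> (forall k, 0 < t k) ->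
  (forall k, 0 < a k) -> forall i,
  exists j, Dfun delta a t kappa (a j + t j) <= Dfun delta a t kappa (a i).
Proof.
move=> hd hk0 hk1 ht ha i.
have Pi : a i <= a i + t i by rewrite lerDl ltW.
case: (@arg_minP _ _ _ i (fun j => a i <= a j + t j) (fun j => a j + t j) Pi).
move=> j /= hj hjmin.
set x := a i; set U := a j + t j.
have hx : 0 < x by apply: ha.
have hU : 0 < U by apply: lt_le_trans hj.
case: (boolP [exists m, a m + t m < x]) => [/existsP [m hm] | /existsPn hn].
  case: (@arg_maxP _ _ _ m (fun j => a j + t j < x) (fun j => a j + t j) hm).
  move=> m' /= hm' hmmax.
  set L := a m' + t m'.
  have hL : 0 < L by apply: ltr_wpDr; [exact: ltW|].
  have hc : forall k, a k + t k <= L \/ U <= a k + t k.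
    move=> k; case: (ltrP (a k + t k) x) => hk.
      by left; apply: hmmax.
    by right; apply: hjmin.
  have := @H_concave delta a t kappa _ _ _ hd hk0 hk1 ht (ltW hm') hj hc.
  rewrite !H_D // => hineq.
  set DL := Dfun _ _ _ _ L in hineq *; set DU := Dfun _ _ _ _ U in hineq *;
  set Dx := Dfun _ _ _ _ x in hineq *.
  have hxL : 0 < x - L by rewrite subr_gt0.
  have hUx : 0 <= U - x by rewrite subr_ge0.
  case: (lerP DL DU) => hDLU.
    exists m'; rewrite -/L -/DL.
    have h1 : (x - L) * (U * DL) <= (x - L) * (U * DU).
      by apply: ler_wpM2l; [exact: ltW| apply: ler_wpM2l; [exact: ltW|]].
    have h2 : (U - L) * x * (Dx - DL) >= 0.
      have -> : (U - L) * x * (Dx - DL) = (U - L) * (x * Dx) - ((U - x) * (L * DL) + (x - L) * (U * DL)) by ring.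
      rewrite subr_ge0; apply: le_trans hineq; exact: lerD.
    have h3 : 0 < (U - L) * x by apply: mulr_gt0; lra.
    rewrite -subr_ge0; move: h2; by rewrite pmulr_rge0.
  exists j; rewrite -/U -/DU.
  have h1 : (U - x) * (L * DU) <= (U - x) * (L * DL).
    by apply: ler_wpM2l => //; apply: ler_wpM2l; [exact: ltW| exact: ltW].
  have h2 : (U - L) * x * (Dx - DU) >= 0.
    have -> : (U - L) * x * (Dx - DU) = (U - L) * (x * Dx) - ((U - x) * (L * DU) + (x - L) * (U * DU)) by ring.
    rewrite subr_ge0; apply: le_trans hineq; exact: lerD.
  have h3 : 0 < (U - L) * x by apply: mulr_gt0; lra.
  rewrite -subr_ge0; move: h2; by rewrite pmulr_rge0.
have hc : forall k, a k + t k <= 0 \/ U <= a k + t k.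
  move=> k; right; apply: hjmin; move: (hn k); by rewrite -leNgt.
have := @H_concave delta a t kappa _ _ _ hd hk0 hk1 ht (ltW hx) hj hc.
rewrite H0 // (@H_D delta a t kappa x hx) (@H_D delta a t kappa U hU) mulr0 add0r subr0 => hineq.
exists j; rewrite -/U.
set DU := Dfun _ _ _ _ U in hineq *; set Dx := Dfun _ _ _ _ x in hineq *.
have h2 : U * x * (Dx - DU) >= 0.
  have -> : U * x * (Dx - DU) = U * (x * Dx) - x * (U * DU) by ring.
  by rewrite subr_ge0; rewrite subr0 in hineq.
rewrite -subr_ge0; move: h2; by rewrite pmulr_rge0 // mulr_gt0.
Qed.
End S.

Lemma foldr_min_le (R : realFieldType) (s : seq R) x0 y : y \in s -> foldr Order.min x0 s <= y.
Proof.
elim: s => //= z s IH; rewrite inE => /orP [/eqP ->|hy].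
  by rewrite ge_min lexx.
by rewrite ge_min IH ?orbT.
Qed.

Lemma foldr_min_id (R : realFieldType) (s : seq R) m : (forall y, y \in s -> m <= y) -> foldr Order.min m s = m.
Proof.
elim: s => //= z s IH h; rewrite IH; last by move=> y hy; apply: h; rewrite inE hy orbT.
by apply: min_r; apply: h; rewrite inE eqxx.
Qed.

Theorem mainTheorem5 (R : realFieldType) (d : nat) (hd : (0 < d)%N)
    (delta a t : 'I_d -> R) (kappa : R)
    (hdelta : forall k, 0 < delta k)
    (hk0 : 0 <= kappa) (hk1 : kappa < 1)
    (ha : forall k, 0 < a k) (ht : forall k, 0 < t k)
    (i0 : 'I_d) :
  let x0 := Dfun delta a t kappa (a i0 + t i0) in
  s_val delta a t kappa x0 = shat_val delta a t kappa x0.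
Proof.
move=> x0; rewrite /s_val /shat_val /minlist foldr_cat.
apply: foldr_min_id => y /mapP [i _ ->].
have [j hj] := @key R d delta a t kappa hdelta hk0 hk1 ht ha i.
apply: le_trans hj; apply: foldr_min_le; apply: map_f; by rewrite mem_enum.
Qed.
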